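(* Let $K\in\mathcal B(H)$, let $\Lambda=\{(W_j,\Lambda_j,v_j)\}_{j\in J}$ be a $K$-g-fusion frame for $H$ with g-fusion frame operator $S_\Lambda$, and let $U\in\mathcal B(H)$ be invertible. The following are equivalent: (I) $\Gamma=\{(UW_j,\ \Lambda_jP_{W_j}U^*,\ v_j)\}_{j\in J}$ is a $UK$-g-fusion frame for $H$; (II) the quotient operator $[(UK)^*/S_\Lambda^{1/2}U^*]$ is (well defined and) bounded; (III) the quotient operator $[(UK)^*/(US_\Lambda U^* )^{1/2}]$ is (well defined and) bounded.
   Context: $H$ is a separable Hilbert space, $J$ a countable index set, $\{H_j\}_{j\in J}$ Hilbert spaces, and $P_W$ the orthogonal projection onto a closed subspace $W$. For closed subspaces $W_j\subseteq H$, weights $v_j>0$, $\Lambda_j\in\mathcal{B}(H,H_j)$ and $K\in\mathcal B(H)$, $\{(W_j,\Lambda_j,v_j)\}_{j\in J}$ is a $K$-g-fusion frame if there exist $0<A\le B<\infty$ with $A\|K^*f\|^2\le\sum_j v_j^2\|\Lambda_jP_{W_j}f\|^2\le B\|f\|^2$ for all $f\in H$. Its g-fusion frame operator is $S_\Lambda f=\sum_{j}v_j^2P_{W_j}\Lambda_j^*\Lambda_jP_{W_j}f$, a bounded positive self-adjoint operator, and $S_\Lambda^{1/2}$ denotes its positive square root. For $A_0,B_0\in\mathcal B(H)$ with $\mathcal N(B_0)\subseteq\mathcal N(A_0)$, the quotient operator $[A_0/B_0]:\mathcal R(B_0)\to\mathcal R(A_0)$ is the linear map $B_0f\mapsto A_0f$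 ($f\in H$); it is bounded if there is $C>0$ with $\|A_0f\|\le C\|B_0f\|$ for all $f\in H$. *)

(* Defs.v *)
From HB Require Import structures.
From mathcomp Require Import all_boot all_order all_algebra.
From mathcomp Require Import all_classical all_reals all_analysis.
From mathcomp Require Import complex.
Set Implicit Arguments. Unset Strict Implicit. Unset Printing Implicit Defensive.
Import Order.TTheory GRing.Theory Num.Theory.
Local Open Scope ring_scope.
Local Open Scope classical_set_scope.

Record HilbertSpace (R : realType) := {
  hcarrier :> lmodType R[i];
  hinner : hcarrier -> hcarrier -> R[i];
  hinner_linear : forall (a : R[i]) (x y z : hcarrier),
      hinner (a *: x + y) z = a * hinner x z + hinner y z;
  hinner_conj : forall x y : hcarrier, hinner y x = conjc (hinner x y);
  hinner_ge0 : forall x : hcarrier, 0 <= hinner x x;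
  hinner_eq0 : forall x : hcarrier, hinner x x = 0 -> x = 0;
  hcomplete : forall u : nat -> hcarrier,
      (forall e : R, 0 < e -> exists N : nat, forall m n : nat, (N <= m)%N -> (N <= n)%N ->
         Num.sqrt (complex.Re (hinner (u m - u n) (u m - u n))) < e) ->
      exists x : hcarrier, forall e : R, 0 < e -> exists N : nat, forall n : nat, (N <= n)%N ->
         Num.sqrt (complex.Re (hinner (u n - x) (u n - x))) < e
}.

Section HilbertDefs.
Variable R : realType.

Definition hnorm (H : HilbertSpace R) (x : H) : R :=
  Num.sqrt (complex.Re (hinner x x)).

Definition separable (H : HilbertSpace R) : Prop :=
  exists d : nat -> H, forall (x : H) (e : R), 0 < e ->
    exists n : nat, hnorm (x - d n) < e.

Definition bounded_op (H1 H2 : HilbertSpace R) (T : H1 -> H2) : Prop :=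
  (forall (a : R[i]) (x y : H1), T (a *: x + y) = a *: T x + T y) /\
  exists M : R, forall x : H1, hnorm (T x) <= M * hnorm x.

Definition is_adjoint (H1 H2 : HilbertSpace R) (T : H1 -> H2) (Tadj : H2 -> H1) : Prop :=
  bounded_op Tadj /\ forall (x : H1) (y : H2), hinner (T x) y = hinner x (Tadj y).

Definition invertible_op (H : HilbertSpace R) (U : H -> H) : Prop :=
  bounded_op U /\ exists V : H -> H, bounded_op V /\ U \o V = id /\ V \o U = id.

Definition closed_subspace (H : HilbertSpace R) (W : set H) : Prop :=
  W 0 /\ (forall (a : R[i]) (x y : H), W x -> W y -> W (a *: x + y)) /\
  (forall (u : nat -> H) (x : H), (forall n, W (u n)) ->
     (forall e : R, 0 < e -> exists N : nat, forall n : nat, (N <= n)%N -> hnorm (u n - x) < e) ->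
     W x).

Definition is_orth_proj (H : HilbertSpace R) (W : set H) (P : H -> H) : Prop :=
  forall x : H, W (P x) /\ forall w : H, W w -> hinner (x - P x) w = 0.

Definition is_pos_sqrt (H : HilbertSpace R) (T Q : H -> H) : Prop :=
  bounded_op Q /\ is_adjoint Q Q /\ (forall x : H, 0 <= hinner (Q x) x) /\
  (forall x : H, Q (Q x) = T x).

(* unconditional convergence of a family of vectors indexed by a countable J:
   the net of finite partial sums converges to s *)
Definition has_sum (J : countType) (H : HilbertSpace R) (F : J -> H) (s : H) : Prop :=
  forall e : R, 0 < e -> exists A0 : seq J, forall A : seq J, uniq A ->
    {subset A0 <= A} -> hnorm (\sum_(j <- A) F j - s) < e.

(* {(W_j, Lam_j, v_j)} is a K-g-fusion frame for H, where P j is the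
   orthogonal projection onto W j and Kadj = K^* *)
Definition K_gfusion_frame (J : countType) (H : HilbertSpace R) (Hs : J -> HilbertSpace R)
    (W : J -> set H) (P : J -> H -> H) (Lam : forall j, H -> Hs j) (v : J -> R)
    (Kadj : H -> H) : Prop :=
  (forall j, closed_subspace (W j)) /\ (forall j, is_orth_proj (W j) (P j)) /\
  (forall j, bounded_op (Lam j)) /\ (forall j, 0 < v j) /\
  exists A B : R, 0 < A /\ A <= B /\ forall f : H,
    ((A * hnorm (Kadj f) ^+ 2)%:E <=
       \esum_(j in [set: J]) ((v j) ^+ 2 * hnorm (Lam j (P j f)) ^+ 2)%:E)%E /\
    (\esum_(j in [set: J]) ((v j) ^+ 2 * hnorm (Lam j (P j f)) ^+ 2)%:E <=
       (B * hnorm f ^+ 2)%:E)%E.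

(* the quotient operator [A0/B0] : R(B0) -> R(A0) is well defined
   (N(B0) \subseteq N(A0)) and bounded *)
Definition quotient_op_bounded (H : HilbertSpace R) (A0 B0 : H -> H) : Prop :=
  (forall f : H, B0 f = 0 -> A0 f = 0) /\
  exists C : R, 0 < C /\ forall f : H, hnorm (A0 f) <= C * hnorm (B0 f).

End HilbertDefs.

(* Main.v *)
Require Import Defs.
From HB Require Import structures.
From mathcomp Require Import all_boot all_order all_algebra.
From mathcomp Require Import all_classical all_reals all_analysis.
From mathcomp Require Import complex.
Import Order.TTheory GRing.Theory Num.Theory.
Local Open Scope ring_scope.
Local Open Scope classical_set_scope.
From mathcomp Require Import ring lra.
Lemma ReD {R : realType} (a b : R[i]) : complex.Re (a + b) = complex.Re a + complex.Re b.
Proof. by case: a; case: b. Qed.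
Lemma ReN {R : realType} (a : R[i]) : complex.Re (- a) = - complex.Re a.
Proof. by case: a. Qed.
Lemma ReB {R : realType} (a b : R[i]) : complex.Re (a - b) = complex.Re a - complex.Re b.
Proof. by rewrite ReD ReN. Qed.
Lemma Re0 {R : realType} : complex.Re (0 : R[i]) = 0.
Proof. by []. Qed.
Lemma ReJ {R : realType} (a : R[i]) : complex.Re (conjc a) = complex.Re a.
Proof. by case: a. Qed.
Lemma ReMr {R : realType} (c : R) (a : R[i]) : complex.Re ((c%:C)%C * a) = c * complex.Re a.
Proof. by case: a => x y /=; rewrite mul0r subr0. Qed.
Lemma Re_sum {R : realType} (I : Type) (s : seq I) (F : I -> R[i]) :
  complex.Re (\sum_(i <- s) F i) = \sum_(i <- s) complex.Re (F i).
Proof.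
elim: s => [|a s IH]; first by rewrite !big_nil.
by rewrite !big_cons ReD IH.
Qed.

Lemma conjD {R : realType} (a b : R[i]) : conjc (a + b) = conjc a + conjc b.
Proof. by case: a; case: b => ? ? ? ? /=; rewrite opprD. Qed.
Lemma conjN {R : realType} (a : R[i]) : conjc (- a) = - conjc a.
Proof. by case: a. Qed.
Lemma conj0 {R : realType} : conjc (0 : R[i]) = 0.
Proof. by rewrite /= oppr0. Qed.

Lemma ipDl {R : realType} {H : HilbertSpace R} (x y z : H) :
  hinner (x + y) z = hinner x z + hinner y z.
Proof. by have := hinner_linear 1 x y z; rewrite scale1r mul1r. Qed.
Lemma ip0l {R : realType} {H : HilbertSpace R} (z : H) : hinner (0 : H) z = 0.
Proof.
have := ipDl (0 : H) 0 z; rewrite addr0 => h.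
by apply: (addrI (hinner (0 : H) z)); rewrite addr0 -h.
Qed.
Lemma ipZl {R : realType} {H : HilbertSpace R} (a : R[i]) (x z : H) :
  hinner (a *: x) z = a * hinner x z.
Proof. by have := hinner_linear a x 0 z; rewrite addr0 ip0l addr0. Qed.
Lemma ipNl {R : realType} {H : HilbertSpace R} (x z : H) :
  hinner (- x) z = - hinner x z.
Proof. by rewrite -scaleN1r ipZl mulN1r. Qed.
Lemma ipBl {R : realType} {H : HilbertSpace R} (x y z : H) :
  hinner (x - y) z = hinner x z - hinner y z.
Proof. by rewrite ipDl ipNl. Qed.
Lemma ipDr {R : realType} {H : HilbertSpace R} (x y z : H) :
  hinner z (x + y) = hinner z x + hinner z y.
Proof. by rewrite hinner_conj ipDl conjD -!hinner_conj. Qed.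
Lemma ip0r {R : realType} {H : HilbertSpace R} (z : H) : hinner z (0 : H) = 0.
Proof. by rewrite hinner_conj ip0l conj0. Qed.
Lemma ipNr {R : realType} {H : HilbertSpace R} (x z : H) :
  hinner z (- x) = - hinner z x.
Proof. by rewrite hinner_conj ipNl conjN -hinner_conj. Qed.
Lemma ipBr {R : realType} {H : HilbertSpace R} (x y z : H) :
  hinner z (x - y) = hinner z x - hinner z y.
Proof. by rewrite ipDr ipNr. Qed.
Lemma ip_sum {R : realType} {H : HilbertSpace R} (I : Type) (s : seq I) (F : I -> H) (z : H) :
  hinner (\sum_(i <- s) F i) z = \sum_(i <- s) hinner (F i) z.
Proof.
elim: s => [|a s IH]; first by rewrite !big_nil ip0l.
by rewrite !big_cons ipDl IH.
Qed.
Lemma Re_ipC {R : realType} {H : HilbertSpace R} (x y : H) :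
  complex.Re (hinner y x) = complex.Re (hinner x y).
Proof. by rewrite hinner_conj ReJ. Qed.

Lemma Re_ip_ge0 {R : realType} {H : HilbertSpace R} (x : H) : 0 <= complex.Re (hinner x x).
Proof. by have := hinner_ge0 x; rewrite lecE => /andP[_]. Qed.
Lemma ip_real {R : realType} {H : HilbertSpace R} (x : H) :
  hinner x x = ((complex.Re (hinner x x))%:C)%C.
Proof. by have := ger0_Im (hinner_ge0 x); case: (hinner x x) => a b /= ->. Qed.
Lemma hnorm_ge0 {R : realType} {H : HilbertSpace R} (x : H) : 0 <= hnorm x.
Proof. exact: sqrtr_ge0. Qed.
Lemma hnorm_sqr {R : realType} {H : HilbertSpace R} (x : H) :
  hnorm x ^+ 2 = complex.Re (hinner x x).
Proof. exact: sqr_sqrtr (Re_ip_ge0 x). Qed.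
Lemma hnorm0 {R : realType} {H : HilbertSpace R} : hnorm (0 : H) = 0.
Proof. by rewrite /hnorm ip0l sqrtr0. Qed.
Lemma hnorm_eq0 {R : realType} {H : HilbertSpace R} (x : H) : hnorm x = 0 -> x = 0.
Proof.
move=> h; apply: hinner_eq0; rewrite ip_real.
have -> : complex.Re (hinner x x) = 0 by rewrite -hnorm_sqr h expr0n.
by [].
Qed.
Lemma hnorm_sq_eq {R : realType} {H : HilbertSpace R} (x y : H) :
  hinner x x = hinner y y -> hnorm x = hnorm y.
Proof. by rewrite /hnorm => ->. Qed.
Lemma linD {R : realType} {H1 H2 : HilbertSpace R} {T : H1 -> H2} :
  bounded_op T -> forall x y, T (x + y) = T x + T y.
Proof. by case=> lin _ x y; have := lin 1 x y; rewrite !scale1r. Qed.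
Lemma lin0 {R : realType} {H1 H2 : HilbertSpace R} {T : H1 -> H2} :
  bounded_op T -> T 0 = 0.
Proof.
move=> hT; have := linD hT 0 0; rewrite addr0 => h.
by apply: (addrI (T 0)); rewrite addr0 -h.
Qed.
Lemma linZ {R : realType} {H1 H2 : HilbertSpace R} {T : H1 -> H2} :
  bounded_op T -> forall a x, T (a *: x) = a *: T x.
Proof. move=> hT a x; have := hT.1 a x 0; by rewrite !addr0 lin0 // addr0. Qed.
Lemma linN {R : realType} {H1 H2 : HilbertSpace R} {T : H1 -> H2} :
  bounded_op T -> forall x, T (- x) = - T x.
Proof. by move=> hT x; rewrite -scaleN1r linZ // scaleN1r. Qed.
Lemma linB {R : realType} {H1 H2 : HilbertSpace R} {T : H1 -> H2} :
  bounded_op T -> forall x y, T (x - y) = T x - T y.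
Proof. by move=> hT x y; rewrite linD // linN. Qed.
Lemma bound_pos {R : realType} {H1 H2 : HilbertSpace R} {T : H1 -> H2} :
  bounded_op T -> exists M, 0 <= M /\ forall x, hnorm (T x) <= M * hnorm x.
Proof.
case=> _ [M hM]; exists `|M|; split=> // x; apply: le_trans (hM x) _.
by apply: ler_wpM2r; [exact: hnorm_ge0 | exact: ler_norm].
Qed.

Lemma q_add {R : realType} {H : HilbertSpace R} (x y : H) :
  complex.Re (hinner (x + y) (x + y)) =
  complex.Re (hinner x x) + complex.Re (hinner y y) + 2 * complex.Re (hinner x y).
Proof. rewrite ipDl !ipDr !ReD (Re_ipC y x). lra. Qed.
Lemma q_sub {R : realType} {H : HilbertSpace R} (x y : H) :
  complex.Re (hinner (x - y) (x - y)) =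
  complex.Re (hinner x x) + complex.Re (hinner y y) - 2 * complex.Re (hinner x y).
Proof. rewrite ipBl !ipBr !ReB (Re_ipC y x). lra. Qed.
Lemma Re_ipZl {R : realType} {H : HilbertSpace R} (t : R) (x y : H) :
  complex.Re (hinner ((t%:C)%C *: x) y) = t * complex.Re (hinner x y).
Proof. by rewrite ipZl ReMr. Qed.
Lemma Re_ipZr {R : realType} {H : HilbertSpace R} (t : R) (x y : H) :
  complex.Re (hinner x ((t%:C)%C *: y)) = t * complex.Re (hinner x y).
Proof. by rewrite Re_ipC Re_ipZl Re_ipC. Qed.

Lemma Re_ip_bound {R : realType} {H : HilbertSpace R} (d g : H) (t : R) :
  2 * t * complex.Re (hinner d g) <= t ^+ 2 * complex.Re (hinner d d) + complex.Re (hinner g g) /\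
  - (2 * t * complex.Re (hinner d g)) <= t ^+ 2 * complex.Re (hinner d d) + complex.Re (hinner g g).
Proof.
have h1 := Re_ip_ge0 ((t%:C)%C *: d - g).
have h2 := Re_ip_ge0 ((t%:C)%C *: d + g).
rewrite q_sub Re_ipZl Re_ipZr Re_ipZl in h1.
rewrite q_add Re_ipZl Re_ipZr Re_ipZl in h2.
split; nra.
Qed.

Lemma Re_ip_small {R : realType} {H : HilbertSpace R} (g : H) (eps : R) : 0 < eps ->
  exists e, 0 < e /\ forall d : H, hnorm d < e -> `|complex.Re (hinner d g)| < eps.
Proof.
move=> he.
set qg := complex.Re (hinner g g).
have qg0 : 0 <= qg := Re_ip_ge0 g.
set t := (qg + 1) / eps.
have t0 : 0 < t by rewrite divr_gt0 //; lra.
have teps : t * eps = qg + 1 by rewrite /t mulrVK // unitfE gt_eqF.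
set e := (t ^+ 2 + 1)^-1.
have e0 : 0 < e by rewrite invr_gt0; nra.
have ee : e * (t ^+ 2 + 1) = 1 by rewrite mulVf // gt_eqF //; nra.
exists e; split => // d hd.
have hd0 := hnorm_ge0 d.
have qd := hnorm_sqr d.
have [b1 b2] := Re_ip_bound d g t.
rewrite -qd -/qg in b1 b2.
set r := complex.Re (hinner d g) in b1 b2 *.
have e1 : e <= 1 by nra.
have k1 : hnorm d ^+ 2 <= e by nra.
have k2 : t ^+ 2 * hnorm d ^+ 2 < 1 by nra.
have c1 : 2 * t * r < t * eps by lra.
have c2 : - (2 * t * r) < t * eps by lra.
rewrite ltr_norml; apply/andP; split; nra.
Qed.
Lemma proj_unique {R : realType} {H : HilbertSpace R} {W : set H} {P : H -> H} :
  closed_subspace W -> is_orth_proj W P ->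
  forall z w, W w -> (forall u, W u -> hinner (z - w) u = 0) -> P z = w.
Proof.
case=> _ [Wl _] hP z w Ww hzw.
have Wd : W (P z - w) by have := Wl (-1) w (P z) Ww (hP z).1; rewrite scaleN1r addrC.
apply/eqP; rewrite -subr_eq0; apply/eqP; apply: hinner_eq0.
have e : P z - w = (z - w) - (z - P z) by rewrite [RHS]addrC opprB addrA subrK.
by rewrite {1}e ipBl hzw // (hP z).2 // subr0.
Qed.

Lemma proj_sym {R : realType} {H : HilbertSpace R} {W : set H} {P : H -> H} :
  is_orth_proj W P -> forall x y, hinner (P x) y = hinner x (P y).
Proof.
move=> hP x y.
rewrite -{1}(subrK (P y) y) -{2}(subrK (P x) x) ipDr ipDl.
rewrite hinner_conj (hP y).2; last exact: (hP x).1.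
rewrite (hP x).2; last exact: (hP y).1.
by rewrite conj0.
Qed.

Lemma proj_bound {R : realType} {H : HilbertSpace R} {W : set H} {P : H -> H} :
  is_orth_proj W P -> forall x, hnorm (P x) <= hnorm x.
Proof.
move=> hP x; rewrite /hnorm ler_sqrt ?Re_ip_ge0 //.
have e : P x + (x - P x) = x by rewrite addrC subrK.
have := q_add (P x) (x - P x); rewrite e => ->.
rewrite (Re_ipC (x - P x) (P x)) ((hP x).2 (P x) (hP x).1).
rewrite Re0 mulr0 addr0 lerDl; exact: Re_ip_ge0.
Qed.

Lemma proj_bounded {R : realType} {H : HilbertSpace R} {W : set H} {P : H -> H} :
  closed_subspace W -> is_orth_proj W P -> bounded_op P.
Proof.
move=> cW hP; split; last by exists 1 => x; rewrite mul1r; exact: proj_bound hP x.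
move=> a x y; apply: (proj_unique cW hP).
  by case: cW => _ [Wl _]; apply: Wl; [exact: (hP x).1 | exact: (hP y).1].
move=> u Wu.
have -> : a *: x + y - (a *: P x + P y) = a *: (x - P x) + (y - P y)
  by rewrite scalerBr opprD addrACA.
by rewrite ipDl ipZl (hP x).2 // (hP y).2 // mulr0 addr0.
Qed.
Lemma term_eq {R : realType} {J : countType} {H : HilbertSpace R} {Hs : J -> HilbertSpace R}
  {W : J -> set H} {P : J -> H -> H} {Lam : forall j, H -> Hs j}
  {Lamadj : forall j, Hs j -> H} (v : J -> R) :
  (forall j, is_orth_proj (W j) (P j)) ->
  (forall j, is_adjoint (Lam j) (Lamadj j)) ->
  forall g j, complex.Re (hinner ((((v j) ^+ 2)%:C)%C *: P j (Lamadj j (Lam j (P j g)))) g)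
    = (v j) ^+ 2 * hnorm (Lam j (P j g)) ^+ 2.
Proof.
move=> hP hL g j.
rewrite Re_ipZl (proj_sym (hP j)) hinner_conj ReJ -(hL j).2 hnorm_sqr //.
Qed.

Lemma core {R : realType} {J : countType} {H : HilbertSpace R} {Hs : J -> HilbertSpace R}
  {W : J -> set H} {P : J -> H -> H} {Lam : forall j, H -> Hs j}
  {Lamadj : forall j, Hs j -> H} (v : J -> R) (S : H -> H) :
  (forall j, is_orth_proj (W j) (P j)) ->
  (forall j, is_adjoint (Lam j) (Lamadj j)) ->
  forall g, has_sum (fun j => (((v j) ^+ 2)%:C)%C *: P j (Lamadj j (Lam j (P j g)))) (S g) ->
  (\esum_(j in [set: J]) ((v j) ^+ 2 * hnorm (Lam j (P j g)) ^+ 2)%:E =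
    (complex.Re (hinner (S g) g))%:E)%E.
Proof.
move=> hP hL g hS.
set a := fun j => (v j) ^+ 2 * hnorm (Lam j (P j g)) ^+ 2.
set r := complex.Re (hinner (S g) g).
have a0 : forall j, 0 <= a j.
  by move=> j; apply: mulr_ge0; exact: sqr_ge0.
have approx : forall eps : R, 0 < eps -> exists A0 : seq J, forall A : seq J, uniq A ->
    {subset A0 <= A} -> `|\sum_(j <- A) a j - r| < eps.
  move=> eps he; have [e [e0 he']] := Re_ip_small g eps he.
  have [A0 hA0] := hS e e0; exists A0 => A uA sA.
  have := he' _ (hA0 A uA sA); rewrite ipBl ReB ip_sum Re_sum.
  by under eq_bigr => j _ do rewrite (term_eq v hP hL).
apply/eqP; rewrite eq_le; apply/andP; split.
  apply: ge_ereal_sup => _ [X [finX _] <-].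
  rewrite fsbig_finite //= sumEFin lee_fin.
  set s := finmap.enum_fset (fset_set X).
  apply/ler_addgt0Pr => eps he.
  have [A0 hA0] := approx eps he.
  set A := s ++ [seq x <- undup A0 | x \notin s].
  have uA : uniq A.
    rewrite /A cat_uniq finmap.fset_uniq /= filter_uniq ?undup_uniq // andbT.
    by apply/hasPn => x; rewrite mem_filter => /andP[].
  have sA : {subset A0 <= A}.
    move=> x xA0; rewrite /A mem_cat; case xs : (x \in s) => //=.
    by rewrite mem_filter xs mem_undup.
  have := hA0 A uA sA; rewrite /A big_cat /= => h.
  have : 0 <= \sum_(j <- [seq x <- undup A0 | x \notin s]) a j by exact: sumr_ge0.
  move: h; rewrite ltr_norml => /andP[_ h1] h2; lra.
apply/lee_addgt0Pr => eps he.
have [A0 hA0] := approx eps he.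
set X := [set` A0].
have finX : finite_set X := finite_seq A0.
set s := finmap.enum_fset (fset_set X).
have sA : {subset A0 <= s}.
  by move=> x xA0; rewrite /s in_fset_set //; exact: mem_set.
have := hA0 s (finmap.fset_uniq _) sA; rewrite ltr_norml => /andP[h1 _].
apply: (@le_trans _ _ ((\sum_(j <- s) a j)%:E + eps%:E)%E); last first.
  apply: leeD2r; apply: esum_ge; exists X; first by split.
  by rewrite fsbig_finite //= sumEFin.
by rewrite -EFinD lee_fin; lra.
Qed.
Theorem theorem4p4 (R : realType) (J : countType) (H : HilbertSpace R)
  (Hs : J -> HilbertSpace R)
  (K Kadj : H -> H) (U Uadj UKadj : H -> H)
  (W : J -> set H) (P : J -> H -> H) (Lam : forall j, H -> Hs j)
  (Lamadj : forall j, Hs j -> H) (v : J -> R)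
  (S S12 T12 : H -> H) (Q : J -> H -> H) :
  separable H ->
  bounded_op K -> is_adjoint K Kadj ->
  K_gfusion_frame W P Lam v Kadj ->
  (forall j, is_adjoint (Lam j) (Lamadj j)) ->
  (* S = S_Lambda, the g-fusion frame operator *)
  (forall f : H, has_sum (fun j => (((v j) ^+ 2)%:C)%C *: P j (Lamadj j (Lam j (P j f)))) (S f)) ->
  (* S12 = S_Lambda^{1/2} *)
  is_pos_sqrt S S12 ->
  invertible_op U -> is_adjoint U Uadj ->
  (* UKadj = (UK)^* *)
  is_adjoint (U \o K) UKadj ->
  (* T12 = (U S_Lambda U^* )^{1/2} *)
  is_pos_sqrt (U \o S \o Uadj) T12 ->
  (* Q j = P_{U W_j} *)
  (forall j, is_orth_proj (U @` W j) (Q j)) ->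
  ((K_gfusion_frame (fun j => U @` W j) Q (fun j => Lam j \o P j \o Uadj) v UKadj
      <-> quotient_op_bounded UKadj (S12 \o Uadj)) /\
   (quotient_op_bounded UKadj (S12 \o Uadj)
      <-> quotient_op_bounded UKadj T12)).
Proof.
move=> _ _ _ hF hL hS hS12 hU hUadj _ hT12 hQ.
case: hF => cW [hP [hLb [hv [A [B [A0 [AB hAB]]]]]]].
case: hS12 => bS12 [adjS12 [_ sqS12]].
case: hU => bU [V [bV [UV VU]]].
case: hUadj => bUadj adjU.
case: hT12 => bT [adjT [_ sqT]].
have normS : forall g, hnorm (S12 g) ^+ 2 = complex.Re (hinner (S g) g).
  by move=> g; rewrite hnorm_sqr -adjS12.2 sqS12.
have esL : forall g, (\esum_(j in [set: J]) ((v j) ^+ 2 * hnorm (Lam j (P j g)) ^+ 2)%:E =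
    (hnorm (S12 g) ^+ 2)%:E)%E.
  by move=> g; rewrite (core v S hP hL g (hS g)) normS.
have PQ : forall j f, P j (Uadj (Q j f)) = P j (Uadj f).
  move=> j f; apply: (proj_unique (cW j) (hP j)); first exact: (hP j _).1.
  move=> u Wu.
  have e : Uadj (Q j f) - P j (Uadj f) = (Uadj f - P j (Uadj f)) - Uadj (f - Q j f).
    by rewrite (linB bUadj) [in RHS]opprB [in RHS]addrC [in RHS]addrA subrK.
  rewrite e ipBl (hP j _).2 // hinner_conj -adjU hinner_conj (hQ j f).2; last by exists u.
  by rewrite !conj0 subr0.
have esG : forall f, (\esum_(j in [set: J]) ((v j) ^+ 2 *
     hnorm ((Lam j \o P j \o Uadj) (Q j f)) ^+ 2)%:E = (hnorm (S12 (Uadj f)) ^+ 2)%:E)%E.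
  move=> f; rewrite -esL; apply: eq_esum => j _ /=; by rewrite PQ.
have nT : forall f, hnorm (T12 f) = hnorm (S12 (Uadj f)).
  move=> f; apply: hnorm_sq_eq.
  by rewrite -adjT.2 sqT /= adjU -sqS12 adjS12.2.
have [Mu [Mu0 hMu]] := bound_pos bUadj.
have frameG : forall A' B', 0 < A' -> A' <= B' ->
    (forall f, A' * hnorm (UKadj f) ^+ 2 <= hnorm (S12 (Uadj f)) ^+ 2) ->
    B * Mu ^+ 2 <= B' ->
    K_gfusion_frame (fun j => U @` W j) Q (fun j => Lam j \o P j \o Uadj) v UKadj.
  move=> A' B' A'0 AB' hlow hB'.
  split.
    move=> j; split; first by exists 0; [exact: (cW j).1 | exact: lin0 bU].
    split.
      move=> a _ _ [x Wx <-] [y Wy <-]; exists (a *: x + y); last exact: bU.1.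
      by apply: (cW j).2.1.
    move=> u x hu hcv.
    have WV : forall n, W j (V (u n)).
      by move=> n; case: (hu n) => w Ww <-; have := congr1 (fun F => F w) VU; rewrite /= => ->.
    have [M [M0 hM]] := bound_pos bV.
    have Vx : W j (V x).
      case: (cW j) => _ [_ cl].
      apply: (cl (fun n => V (u n)) (V x) WV) => e e0.
      have e1 : 0 < e / (M + 1) by rewrite divr_gt0 //; lra.
      have [N hN] := hcv _ e1; exists N => n hn.
      have := hN n hn; rewrite ltr_pdivlMr; last lra.
      rewrite -(linB bV) => h; apply: le_lt_trans (hM _) _.
      have := hnorm_ge0 (u n - x); nra.
    by exists (V x) => //; have := congr1 (fun F => F x) UV; rewrite /= => ->.
  split; first exact: hQ.
  split.
    move=> j; split.
      move=> a x y /=.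
      by rewrite bUadj.1 (proj_bounded (cW j) (hP j)).1 (hLb j).1.
    have [M1 [M10 hM1]] := bound_pos (hLb j).
    exists (M1 * Mu) => x /=.
    apply: le_trans (hM1 _) _; rewrite -mulrA; apply: ler_wpM2l => //.
    exact: le_trans (proj_bound (hP j) _) (hMu x).
  split; first exact: hv.
  exists A', B'; split => //; split => // f; split.
    by rewrite esG lee_fin.
  rewrite esG; apply: (@le_trans _ _ (B * hnorm (Uadj f) ^+ 2)%:E).
    by rewrite -esL; exact: (hAB (Uadj f)).2.
  rewrite lee_fin.
  have h1 := hMu f; have h2 := hnorm_ge0 (Uadj f); have h3 := hnorm_ge0 f.
  have k : hnorm (Uadj f) ^+ 2 <= Mu ^+ 2 * hnorm f ^+ 2 by nra.
  have B0 : 0 <= B by lra.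
  have k2 : B * hnorm (Uadj f) ^+ 2 <= (B * Mu ^+ 2) * hnorm f ^+ 2.
    by rewrite -mulrA; apply: ler_wpM2l.
  apply: le_trans k2 _; apply: ler_wpM2r => //; exact: sqr_ge0.
split; last first.
  split.
    case=> ker [C [C0 hC]]; split.
      move=> f hf; apply: ker => /=; apply: hnorm_eq0; by rewrite -nT hf hnorm0.
    by exists C; split => // f; rewrite nT; exact: hC.
  case=> ker [C [C0 hC]]; split.
    move=> f /= hf; apply: ker; apply: hnorm_eq0; by rewrite nT hf hnorm0.
  by exists C; split => // f; rewrite -nT; exact: hC.
split.
  case=> _ [_ [_ [_ [A' [B' [A'0 [_ hG]]]]]]].
  have low : forall f, A' * hnorm (UKadj f) ^+ 2 <= hnorm (S12 (Uadj f)) ^+ 2.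
    by move=> f; have := (hG f).1; rewrite esG lee_fin.
  split.
    move=> f /= hf; apply: hnorm_eq0; have := low f; rewrite hf hnorm0 expr0n /=.
    have := hnorm_ge0 (UKadj f) => h1 h2.
    have h4 : hnorm (UKadj f) * hnorm (UKadj f) <= 0 by move: h2; rewrite expr2 pmulr_rle0.
    have : hnorm (UKadj f) <= 0 by nra.
    by move=> h3; apply: le_anti; rewrite h3 h1.
  set C := Num.sqrt (A'^-1).
  have CA : C ^+ 2 * A' = 1 by rewrite sqr_sqrtr ?invr_ge0 ?ltW // mulVf // gt_eqF.
  have C0 : 0 < C by rewrite sqrtr_gt0 invr_gt0.
  exists C; split => // f /=.
  have h1 := hnorm_ge0 (UKadj f); have h2 := hnorm_ge0 (S12 (Uadj f)); have l := low f.
  have k : hnorm (UKadj f) ^+ 2 <= (C * hnorm (S12 (Uadj f))) ^+ 2.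
    rewrite exprMn -[X in X <= _]mul1r -CA -mulrA; apply: ler_wpM2l => //; exact: sqr_ge0.
  have h3 : 0 <= C * hnorm (S12 (Uadj f)) by apply: mulr_ge0 => //; exact: ltW.
  move: k h1 h3; rewrite !expr2.
  move: (C * hnorm (S12 (Uadj f))) (hnorm (UKadj f)) => b a k h1 h3; nra.
case=> _ [C [C0 hC]].
have C20 : 0 < C ^+ 2 by rewrite exprn_gt0.
apply: (frameG ((C ^+ 2)^-1) (Num.max ((C ^+ 2)^-1) (B * Mu ^+ 2))).
- by rewrite invr_gt0.
- by rewrite le_max lexx.
- move=> f; have := hC f; rewrite /= => h.
  have h1 := hnorm_ge0 (UKadj f); have h2 := hnorm_ge0 (S12 (Uadj f)).
  have k : hnorm (UKadj f) ^+ 2 <= C ^+ 2 * hnorm (S12 (Uadj f)) ^+ 2.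
    rewrite -exprMn; nra.
  rewrite -(mulKf (lt0r_neq0 C20) (hnorm (S12 (Uadj f)) ^+ 2)).
  apply: ler_wpM2l; [by rewrite invr_ge0 ltW | exact: k].
- by rewrite le_max lexx orbT.
Qed.
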